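(* In any category, consider morphisms $f_1,f_2:A_{11}\to A_{12}$, $f'_1,f'_2:A_{11}\to A_{21}$, $g'_1,g'_2:A_{12}\to A_{22}$ and $g_1,g_2:A_{21}\to A_{22}$ such that $g_i\circ f'_j=g'_j\circ f_i$ for all $i,j\in\{1,2\}$, and suppose there exist $s:A_{12}\to A_{11}$ and $s':A_{21}\to A_{11}$ with $f_1 s=f_2 s=1_{A_{12}}$ and $f'_1 s'=f'_2 s'=1_{A_{21}}$. Then a morphism $x:A_{22}\to B$ satisfies $x g'_1 f_1=x g'_2 f_2$ if and only if $x g_1=x g_2$ and $x g'_1=x g'_2$. Consequently, the coequalizer of $g'_1\circ f_1$ and $g'_2\circ f_2$ is the cointersection of the coequalizer of $g_1,g_2$ and the coequalizer of $g'_1,g'_2$.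
   Context: The cointersection of two quotient maps $c:A_{22}\to C$ and $c':A_{22}\to C'$ is their pushout, i.e. the universal morphism $A_{22}\to D$ through which both factor. *)

(* Defs.v *)
Record Category : Type := {
  Obj :> Type;
  Hom : Obj -> Obj -> Type;
  idm : forall A : Obj, Hom A A;
  comp : forall {A B C : Obj}, Hom B C -> Hom A B -> Hom A C;
  comp_assoc : forall (A B C D : Obj) (h : Hom C D) (g : Hom B C) (f : Hom A B),
      comp h (comp g f) = comp (comp h g) f;
  comp_id_l : forall (A B : Obj) (f : Hom A B), comp (idm B) f = f;
  comp_id_r : forall (A B : Obj) (f : Hom A B), comp f (idm A) = f
}.

Arguments Hom {c} _ _.
Arguments idm {c} _.
Arguments comp {c} {A B C} _ _.

Definition is_coequalizer {C : Category} {X Y Q : C}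
  (f g : Hom X Y) (q : Hom Y Q) : Prop :=
  comp q f = comp q g /\
  forall (B : C) (x : Hom Y B), comp x f = comp x g ->
    exists! u : Hom Q B, comp u q = x.

Definition is_cointersection {C : Category} {A C1 C2 D : C}
  (c : Hom A C1) (c' : Hom A C2) (d : Hom A D) : Prop :=
  (exists u : Hom C1 D, comp u c = d) /\
  (exists u' : Hom C2 D, comp u' c' = d) /\
  forall (B : C) (x : Hom A B),
    (exists v : Hom C1 B, comp v c = x) ->
    (exists v' : Hom C2 B, comp v' c' = x) ->
    exists! w : Hom D B, comp w d = x.

(* Main.v *)
Require Import Defs.

Theorem proposition1 (C : Category) (A11 A12 A21 A22 : C)
  (f1 f2 : Hom A11 A12) (f'1 f'2 : Hom A11 A21)
  (g'1 g'2 : Hom A12 A22) (g1 g2 : Hom A21 A22)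
  (H11 : comp g1 f'1 = comp g'1 f1)
  (H12 : comp g1 f'2 = comp g'2 f1)
  (H21 : comp g2 f'1 = comp g'1 f2)
  (H22 : comp g2 f'2 = comp g'2 f2)
  (s : Hom A12 A11) (s' : Hom A21 A11)
  (Hs1 : comp f1 s = idm A12) (Hs2 : comp f2 s = idm A12)
  (Hs'1 : comp f'1 s' = idm A21) (Hs'2 : comp f'2 s' = idm A21) :
  (forall (B : C) (x : Hom A22 B),
     comp x (comp g'1 f1) = comp x (comp g'2 f2) <->
     (comp x g1 = comp x g2 /\ comp x g'1 = comp x g'2)) /\
  (forall (Cc Cc' Q : C) (c : Hom A22 Cc) (c' : Hom A22 Cc') (q : Hom A22 Q),
     is_coequalizer g1 g2 c ->
     is_coequalizer g'1 g'2 c' ->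
     (is_coequalizer (comp g'1 f1) (comp g'2 f2) q <->
      is_cointersection c c' q)).
Proof.
  assert (P1 : forall (B : C) (x : Hom A22 B),
     comp x (comp g'1 f1) = comp x (comp g'2 f2) <->
     (comp x g1 = comp x g2 /\ comp x g'1 = comp x g'2)).
  { intros B x; split.
    - intros H; split.
      + assert (E1 : comp x g1 = comp (comp x (comp g1 f'1)) s').
        { rewrite <- !comp_assoc, Hs'1, comp_id_r; reflexivity. }
        assert (E2 : comp x g2 = comp (comp x (comp g2 f'2)) s').
        { rewrite <- !comp_assoc, Hs'2, comp_id_r; reflexivity. }
        rewrite E1, E2, H11, H22, H; reflexivity.
      + assert (E1 : comp x g'1 = comp (comp x (comp g'1 f1)) s).
        { rewrite <- !comp_assoc, Hs1, comp_id_r; reflexivity. }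
        assert (E2 : comp x g'2 = comp (comp x (comp g'2 f2)) s).
        { rewrite <- !comp_assoc, Hs2, comp_id_r; reflexivity. }
        rewrite E1, E2, H; reflexivity.
    - intros [Ha Hb].
      rewrite <- H11, <- H22, !comp_assoc, Ha, <- !comp_assoc, H21, H22.
      rewrite !comp_assoc, Hb; reflexivity. }
  split; [exact P1|].
  intros Cc Cc' Q c c' q [Hc Uc] [Hc' Uc'].
  assert (F : forall (B : C) (x : Hom A22 B),
     comp x (comp g'1 f1) = comp x (comp g'2 f2) <->
     ((exists v : Hom Cc B, comp v c = x) /\ (exists v' : Hom Cc' B, comp v' c' = x))).
  { intros B x; split.
    - intros Hx; destruct (proj1 (P1 B x) Hx) as [Ha Hb]; split.
      + destruct (Uc B x Ha) as [u [Hu _]]; eauto.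
      + destruct (Uc' B x Hb) as [u [Hu _]]; eauto.
    - intros [[v Hv] [v' Hv']]; apply (proj2 (P1 B x)); subst x; split.
      + rewrite <- !comp_assoc, Hc; reflexivity.
      + rewrite <- Hv', <- !comp_assoc, Hc'; reflexivity. }
  split.
  - intros [Hq Uq].
    destruct (proj1 (F Q q) Hq) as [E1 E2].
    split; [exact E1|]; split; [exact E2|].
    intros B x Ex Ex'. apply Uq. apply F; auto.
  - intros [E1 [E2 U]].
    destruct E1 as [u Hu]; destruct E2 as [u' Hu'].
    split.
    + apply F; split; eauto.
    + intros B x Hx. destruct (proj1 (F B x) Hx) as [A1 A2]. apply U; auto.
Qed.
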